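(* Every element $\theta$ of the Thompson group $T$ is piecewise dynamical: for every interval of linearity $I$ of $\theta$ there exist $m,n\in\mathbb{N}_0$ such that $g^m\circ\theta=g^n$ on $I$.
   Context: $\mathbb{T}$ is the unit circle with angular coordinate $\theta\in\mathbb{R}/\mathbb{Z}$; dyadic points are those with angular coordinate $k/2^j$. $g(z)=z^2$ is the doubling map of $\mathbb{T}$. The Thompson group $T$ is the group of orientation-preserving homeomorphisms of $\mathbb{T}$ that are piecewise linear in the angular coordinate with finitely many break points, all dyadic, with slopes integer powers of $2$, and mapping dyadic points to dyadic points. *)

(* Defs.v *)
From HB Require Import structures.
From mathcomp Require Import all_boot all_order all_algebra.
From mathcomp Require Import all_classical all_reals.
From mathcomp Require Import all_analysis.
Set Implicit Arguments. Unset Strict Implicit. Unset Printing Implicit Defensive.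
Import Order.TTheory GRing.Theory Num.Theory numFieldNormedType.Exports.
Local Open Scope ring_scope.

(* Circle T = R/Z with angular coordinate; a circle map is represented
   by a lift F : R -> R.  Points of the circle are reals modulo 1. *)

Definition dyadic {R : realType} (x : R) : Prop :=
  exists (k : int) (j : nat), x = k%:~R / 2 ^+ j.

Definition circ_eq {R : realType} (x y : R) : Prop :=
  exists k : int, x - y = k%:~R.

(* F is a lift of an element of Thompson's group T:
   - F is an increasing homeomorphism of R commuting with x |-> x+1
     (i.e. a lift of an orientation-preserving homeomorphism of T);
   - there is a finite set s of dyadic break points such that on any
     interval containing no point of s + Z, F is affine with slope an
     integer power of 2;
   - F maps dyadic points to dyadic points. *)
Definition thompsonT {R : realType} (F : R -> R) : Prop :=
  [/\ continuous F,
      (forall x y : R, x < y -> F x < F y),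
      (forall x : R, F (x + 1) = F x + 1),
      (forall x : R, dyadic x -> dyadic (F x)) &
      exists s : seq R, (forall d, d \in s -> dyadic d) /\
        forall a b : R, a < b ->
          (forall x (k : int), a < x < b -> (x - k%:~R) \notin s) ->
          exists (z : int) (c : R), forall x, a <= x <= b -> F x = 2 ^ z * x + c].

Definition affine_on {R : realType} (F : R -> R) (a b : R) : Prop :=
  exists s c : R, forall x, a < x < b -> F x = s * x + c.

(* (a,b), an arc of the circle (length <= 1), is an interval of linearity
   of F: F is affine on it and it is maximal with this property. *)
Definition interval_of_linearity {R : realType} (F : R -> R) (a b : R) : Prop :=
  [/\ a < b, b - a <= 1, affine_on F a b &
      forall a' b' : R, a' <= a -> b <= b' -> b' - a' <= 1 ->
        affine_on F a' b' -> a' = a /\ b' = b].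

(* Main.v *)
Require Import Defs.
From HB Require Import structures.
From mathcomp Require Import all_boot all_order all_algebra.
From mathcomp Require Import all_classical all_reals.
From mathcomp Require Import all_analysis.
From mathcomp Require Import lra zify ring.
Import Order.TTheory GRing.Theory Num.Theory numFieldNormedType.Exports.
Local Open Scope ring_scope.

Lemma avoid (R: realType) (s : seq R) (a b : R) : a < b ->
  exists a1 b1, [/\ a <= a1, a1 < b1, b1 <= b &
    forall x (k:int), a1 < x < b1 -> (x - k%:~R) \notin s].
Proof.
elim: s a b => [|d s IH] a b ab.
  by exists a, b; split.
have [p [q [ap pq qb H]]] := IH a b ab.
set k : int := Num.floor (p - d) + 1.
set y : R := d + k%:~R.
have fl := floor_itv (p - d).
have py : p < y.
  rewrite /y /k; case/andP: fl => _ h; lra.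
exists p, (Num.min q y); split => //.
- by rewrite lt_min pq py.
- by rewrite ge_min qb.
move=> x k' /andP[px]; rewrite lt_min => /andP[xq xy].
rewrite in_cons negb_or; apply/andP; split; last by apply: H; rewrite px xq.
apply/negP => /eqP ex.
have xe : x = d + k'%:~R by rewrite -ex; ring.
case: (ltP k' k) => hk.
  have : k' <= Num.floor (p - d) by rewrite /k in hk; lia.
  rewrite -(ler_int R) => h.
  case/andP: fl => fl1 _; lra.
have : k%:~R <= k'%:~R :> R by rewrite ler_int.
rewrite /y in xy; lra.
Qed.

Lemma dense (R: realType) (a b : R) : a < b -> exists (k : int) (j : nat),
  a < k%:~R / 2 ^+ j < b.
Proof.
move=> ab.
set n := Num.truncn ((b - a)^-1).
have hn := truncnS_gt ((b - a)^-1).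
have h2 : (n.+1%:R : R) <= 2 ^+ n.+1.
  rewrite -natrX ler_nat; apply: ltnW; exact: ltn_expl.
have ba : 0 < b - a by lra.
have p2 : (0:R) < 2 ^+ n.+1 by apply: exprn_gt0.
exists (Num.floor (a * 2 ^+ n.+1) + 1), n.+1.
have fl := floor_itv (a * 2 ^+ n.+1).
rewrite intrD /= in fl *.
case/andP: fl => f1 f2.
apply/andP; split.
  by rewrite ltr_pdivlMr.
rewrite ltr_pdivrMr //.
have : 1 < (b - a) * 2 ^+ n.+1.
  have : (b - a)^-1 < 2 ^+ n.+1 by lra.
  have e : (b-a) * (b-a)^-1 = 1 by rewrite mulfV //; apply: lt0r_neq0.
  move=> h; nra.
lra.
Qed.

Theorem corollary5p3 (R : realType) (F : R -> R) :
  thompsonT F ->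
  forall a b : R, interval_of_linearity F a b ->
  exists m n : nat, forall x : R, a < x < b ->
    circ_eq (2 ^+ m * F x) (2 ^+ n * x).
Proof.
move=> [_ _ _ Hdy [sl [_ Hbr]]] a b [ab _ [s0 [c0 Haff]] _].
have [a1 [b1 [aa1 a1b1 b1b Hav]]] := @avoid R sl a b ab.
have [z [c1 Hz]] := Hbr a1 b1 a1b1 Hav.
have [k0 [j0 /andP[h1 h2]]] := @dense R a1 b1 a1b1.
set x0 := k0%:~R / 2 ^+ j0 in h1 h2.
have [k1 [j1 e1]] : dyadic (F x0) by apply: Hdy; exists k0, j0.
set w : R := 2 ^ z in Hz.
set x2 := (x0 + b1) / 2.
have ex0 : s0 * x0 + c0 = w * x0 + c1.
  rewrite -Haff ?Hz //; apply/andP; split; lra.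
have ex2 : s0 * x2 + c0 = w * x2 + c1.
  rewrite -Haff ?Hz //; rewrite /x2; apply/andP; split; lra.
have es : s0 = w.
  have : (s0 - w) * (x2 - x0) = 0.
    have -> : (s0 - w) * (x2 - x0) = (s0 * x2 + c0 - (w * x2 + c1)) - (s0 * x0 + c0 - (w * x0 + c1)) by ring.
    by rewrite ex0 ex2; ring.
  move/eqP; rewrite mulf_eq0 => /orP[/eqP h|/eqP h]; first lra.
  rewrite /x2 in h; lra.
have ec : c0 = c1 by rewrite es in ex0; lra.
have [p [q ew]] : exists p q : nat, w = 2 ^+ p / 2 ^+ q.
  rewrite /w; case: z {Hz w ex0 ex2 es} => p.
    by exists p, 0%N; rewrite expr0 divr1.
  by exists 0%N, p.+1; rewrite expr0 div1r.
have Fx0 : F x0 = w * x0 + c1 by apply: Hz; apply/andP; split; lra.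
exists (q + j1 + j0)%N, (p + j1 + j0)%N => x hx.
exists (2 ^+ (q + j0) * k1 - 2 ^+ (p + j1) * k0).
rewrite Haff // es ec.
have -> : c1 = F x0 - w * x0 by rewrite Fx0; ring.
rewrite e1 ew /x0.
rewrite rmorphB !rmorphM !rmorphXn /= !exprD.
field.
by apply/and3P; split; apply: expf_neq0.
Qed.
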